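(* Let $G$ be a group with finite presentation $\mathcal P=\langle t,\mathcal A:\mathcal R,\ t^{-1}at=\phi(a)\ (a\in\mathcal A)\rangle$, $A=\langle\mathcal A\rangle\le G$, $X$ the Cayley 2-complex, $M,N\ge0$ integers, and $t^NA\cdot Q(M)=\{t^Nat^{-m}:a\in A,\ 0\le m\le M\}$. Let $K_0$ be the component of $X-\{at^{-m}:a\in A,\ 0\le m\le M\}$ containing the vertex $t$, and let $v$ be a vertex of the component $t^NK_0$ of $X-t^NA\cdot Q(M)$. Then for every integer $n\ge0$, $(vt^nA)\cap t^NA\cdot Q(M)=\emptyset$.
   Context: $\mathcal A$ is finite, $\mathcal R\subset F(\mathcal A)$ finite, $\phi:F(\mathcal A)\to F(\mathcal A)$ a homomorphism. $X$ is the simply connected 2-complex with vertex set $G$, 1-skeleton the Cayley graph of $G$ with respect to $\mathcal A\cup\{t\}$, and 2-cells for the relators; $G$ acts by left multiplication. *)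

(* Defs.v *)
From mathcomp Require Import all_boot.
Set Implicit Arguments. Unset Strict Implicit. Unset Printing Implicit Defensive.

Section Pres.
Variable Ax : finType.

(* letters of F(A u {t}): None = t, Some a = a; the boolean is "inverted" *)
Definition letter := (option Ax * bool)%type.
Definition word := seq letter.
Definition aword := seq (Ax * bool)%type.

Definition inv_letter (x : letter) : letter := (x.1, ~~ x.2).
Definition inv_word (w : word) : word := rev (map inv_letter w).
Definition emb (u : aword) : word := map (fun x => (Some x.1, x.2)) u.

Definition t_word : word := [:: (None, false)].
Definition tinv_word : word := [:: (None, true)].
Definition tpow (n : nat) : word := flatten (nseq n t_word).
Definition tinvpow (n : nat) : word := flatten (nseq n tinv_word).

Definition areduced (u : aword) : bool :=
  sorted (fun x y : (Ax * bool)%type => y != (x.1, ~~ x.2)) u.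

Definition hnn_rel (phi : Ax -> aword) (a : Ax) : word :=
  [:: (None, true); (Some a, false); (None, false)] ++ inv_word (emb (phi a)).
Definition relators (R : seq aword) (phi : Ax -> aword) : seq word :=
  map emb R ++ map (hnn_rel phi) (enum Ax).

Inductive geq (rels : seq word) : word -> word -> Prop :=
| geq_refl w : geq rels w w
| geq_sym w1 w2 : geq rels w1 w2 -> geq rels w2 w1
| geq_trans w1 w2 w3 : geq rels w1 w2 -> geq rels w2 w3 -> geq rels w1 w3
| geq_free u v x : geq rels (u ++ x :: inv_letter x :: v) (u ++ v)
| geq_rel u v r : r \in rels -> geq rels (u ++ r ++ v) (u ++ v).

Definition inA (rels : seq word) (g : word) : Prop :=
  exists u : aword, geq rels g (emb u).

Definition inTAQ (rels : seq word) (N M : nat) (g : word) : Prop :=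
  exists (u : aword) (m : nat), m <= M /\ geq rels g (tpow N ++ emb u ++ tinvpow m).

(* Two vertices of the Cayley 2-complex X lie in a common closed cell:
   same vertex, joined by an edge g -- g s^{+-1}, or both on the boundary
   of the 2-cell c.r (vertices c.(prefix of r)). *)
Definition cell_adj (rels : seq word) (g h : word) : Prop :=
  geq rels g h
  \/ (exists x : letter, geq rels h (g ++ [:: x]))
  \/ (exists (c r : word) (k l : nat), r \in rels /\
        geq rels g (c ++ take k r) /\ geq rels h (c ++ take l r)).

(* vertices g, h lie in the same path component of X - S, S a set of
   vertices (the open cells avoiding S stay, so components are generated by
   closed cells whose two given vertices are outside S). *)
Inductive conn (rels : seq word) (S : word -> Prop) : word -> word -> Prop :=
| conn_base g : ~ S g -> conn rels S g g
| conn_step g h k : conn rels S g h -> ~ S k -> cell_adj rels h k ->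
    conn rels S g k.

End Pres.

(* Main.v *)
From Stdlib Require Import ZArith Lia.
From mathcomp Require Import all_boot.
Require Import Defs.

Set Implicit Arguments. Unset Strict Implicit. Unset Printing Implicit Defensive.

Lemma geq_catl (Ax : finType) (rels : seq (word Ax)) p x y :
  geq rels x y -> geq rels (p ++ x) (p ++ y).
Proof.
elim=> {x y}.
- by move=> w; apply: geq_refl.
- by move=> ? ? _ H; apply: geq_sym.
- by move=> ? ? ? _ H1 _ H2; apply: geq_trans H2.
- by move=> u v x; have := geq_free rels (p ++ u) v x; rewrite -!catA.
- by move=> u v r Hr; have := geq_rel (p ++ u) v Hr; rewrite -!catA.
Qed.

Lemma geq_catr (Ax : finType) (rels : seq (word Ax)) p x y :
  geq rels x y -> geq rels (x ++ p) (y ++ p).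
Proof.
elim=> {x y}.
- by move=> w; apply: geq_refl.
- by move=> ? ? _ H; apply: geq_sym.
- by move=> ? ? ? _ H1 _ H2; apply: geq_trans H2.
- by move=> u v x; have := geq_free rels u (v ++ p) x; rewrite -!catA.
- by move=> u v r Hr; have := geq_rel u (v ++ p) Hr; rewrite -!catA.
Qed.

Lemma geq_cat (Ax : finType) (rels : seq (word Ax)) x x' y y' :
  geq rels x x' -> geq rels y y' -> geq rels (x ++ y) (x' ++ y').
Proof.
move=> H1 H2; apply: geq_trans (geq_catr _ H1) _; exact: geq_catl.
Qed.

Lemma inv_letterK (Ax : finType) : involutive (@inv_letter Ax).
Proof. by case=> ? []. Qed.

Lemma inv_word_cons (Ax : finType) (x : letter Ax) p :
  inv_word (x :: p) = inv_word p ++ [:: inv_letter x].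
Proof. by rewrite /inv_word /= rev_cons cats1. Qed.

Lemma inv_wordK (Ax : finType) : involutive (@inv_word Ax).
Proof.
move=> p; rewrite /inv_word map_rev revK -map_comp.
by rewrite (eq_map (@inv_letterK Ax)) map_id.
Qed.

Lemma geq_cancel_r (Ax : finType) (rels : seq (word Ax)) p :
  geq rels (p ++ inv_word p) [::].
Proof.
elim: p => [|x p IH] /=; first exact: geq_refl.
rewrite inv_word_cons catA.
apply: (geq_trans _ (geq_free rels [::] [::] x)).
have := geq_catr [:: inv_letter x] (geq_catl [:: x] IH).
by rewrite -!catA.
Qed.

Lemma geq_cancel_l (Ax : finType) (rels : seq (word Ax)) p :
  geq rels (inv_word p ++ p) [::].
Proof. by have := geq_cancel_r rels (inv_word p); rewrite inv_wordK. Qed.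

Lemma geq_lcancel (Ax : finType) (rels : seq (word Ax)) p x y :
  geq rels (p ++ x) (p ++ y) -> geq rels x y.
Proof.
move=> H.
have E z : geq rels (inv_word p ++ p ++ z) z.
  by rewrite catA; have := geq_catr z (geq_cancel_l rels p).
apply: geq_trans (geq_sym (E x)) _; apply: (geq_trans _ (E y)).
exact: geq_catl.
Qed.

Definition ht_l (Ax : finType) (x : letter Ax) : Z :=
  match x with (None, false) => 1%Z | (None, true) => (-1)%Z | _ => 0%Z end.
Definition ht (Ax : finType) (w : word Ax) : Z :=
  foldr (fun x acc => (ht_l x + acc)%Z) 0%Z w.

Lemma ht_cat (Ax : finType) (x y : word Ax) : ht (x ++ y) = (ht x + ht y)%Z.
Proof. elim: x => [|a x IH] /=; [done | rewrite IH; lia]. Qed.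

Lemma ht_cons (Ax : finType) (x : letter Ax) w : ht (x :: w) = (ht_l x + ht w)%Z.
Proof. by []. Qed.

Lemma ht_emb (Ax : finType) (u : aword Ax) : ht (emb u) = 0%Z.
Proof. by elim: u => [|a u IH] //=; rewrite IH. Qed.

Definition ainv (Ax : finType) (u : aword Ax) : aword Ax :=
  rev (map (fun x => (x.1, ~~ x.2)) u).

Lemma emb_ainv (Ax : finType) (u : aword Ax) : emb (ainv u) = inv_word (emb u).
Proof.
rewrite /emb /ainv /inv_word map_rev -!map_comp; congr rev; exact: eq_map.
Qed.

Lemma emb_cat (Ax : finType) (u v : aword Ax) : emb (u ++ v) = emb u ++ emb v.
Proof. exact: map_cat. Qed.

Lemma ht_rel (Ax : finType) (R : seq (aword Ax)) phi r :
  r \in relators R phi -> ht r = 0%Z.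
Proof.
rewrite mem_cat => /orP [] /mapP [x _ ->]; first exact: ht_emb.
rewrite /hnn_rel ht_cat -emb_ainv ht_emb /=; lia.
Qed.

Lemma geq_ht (Ax : finType) (R : seq (aword Ax)) phi x y :
  geq (relators R phi) x y -> ht x = ht y.
Proof.
elim=> {x y} //.
- by move=> ? ? ? _ -> _ ->.
- move=> u v x; rewrite !ht_cat !ht_cons.
  have : (ht_l x + ht_l (inv_letter x))%Z = 0%Z by case: x => [[a|] []].
  lia.
- by move=> u v r Hr; rewrite !ht_cat (ht_rel Hr); lia.
Qed.

Lemma ht_tinvpow (Ax : finType) j : ht (tinvpow Ax j) = (- Z.of_nat j)%Z.
Proof.
elim: j => [|j IH] //.
rewrite (_ : tinvpow Ax j.+1 = (None, true) :: tinvpow Ax j) // ht_cons IH.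
have -> : ht_l ((None, true) : letter Ax) = (-1)%Z by [].
lia.
Qed.

Lemma tinvpowS (Ax : finType) j :
  tinvpow Ax j.+1 = tinvpow Ax j ++ [:: (None, true)].
Proof.
have E (k : nat) : tinvpow Ax k = nseq k (None, true).
  elim: k => // k IH; change (tinvpow Ax k.+1) with ((None, true) :: tinvpow Ax k); by rewrite IH.
rewrite !E; by elim: j => //= j ->.
Qed.

Lemma tpowS (Ax : finType) j : tpow Ax j.+1 = [:: (None, false)] ++ tpow Ax j.
Proof. by []. Qed.

Lemma hnn_in (Ax : finType) (R : seq (aword Ax)) phi a :
  hnn_rel phi a \in relators R phi.
Proof. by rewrite mem_cat; apply/orP; right; apply: map_f; rewrite mem_enum. Qed.

Lemma comm1 (Ax : finType) (R : seq (aword Ax)) phi a :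
  geq (relators R phi) [:: (None, true); (Some a, false)]
      (emb (phi a) ++ [:: (None, true)]).
Proof.
apply: geq_sym.
apply: geq_trans (geq_sym (geq_rel [::] (emb (phi a) ++ [:: (None, true)]) (hnn_in R phi a))) _.
rewrite /= /hnn_rel.
have := geq_catr [:: (None, true)]
   (geq_catl [:: (None, true); (Some a, false); (None, false)]
     (geq_cancel_l (relators R phi) (emb (phi a)))).
rewrite -!catA /= => H; apply: geq_trans H _.
exact: (geq_free _ [:: (None, true); (Some a, false)] [::] (None, false)).
Qed.

Lemma comm1' (Ax : finType) (R : seq (aword Ax)) phi a :
  geq (relators R phi) [:: (None, true); (Some a, true)]
      (emb (ainv (phi a)) ++ [:: (None, true)]).
Proof.
set rels := relators R phi.
apply: geq_sym.
have Hf := geq_free rels (emb (ainv (phi a)) ++ [:: (None, true)]) [::] (Some a, false).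
rewrite cats0 in Hf; apply: geq_trans (geq_sym Hf) _.
rewrite -!catA /=.
have H1 := geq_catl (emb (ainv (phi a))) (geq_catr [:: (Some a, true)] (comm1 R phi a)).
rewrite /= -!catA /= in H1; apply: geq_trans H1 _.
rewrite catA emb_ainv.
have := geq_catr [:: (None, true); (Some a, true)] (geq_cancel_l rels (emb (phi a))).
by rewrite -!catA.
Qed.

Definition phiL (Ax : finType) (phi : Ax -> aword Ax) (x : (Ax * bool)%type) :=
  if x.2 then ainv (phi x.1) else phi x.1.
Definition phiS (Ax : finType) (phi : Ax -> aword Ax) (u : aword Ax) :=
  flatten (map (phiL phi) u).

Lemma commS (Ax : finType) (R : seq (aword Ax)) phi u :
  geq (relators R phi) ([:: (None, true)] ++ emb u) (emb (phiS phi u) ++ [:: (None, true)]).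
Proof.
elim: u => [|[a b] u IH] /=; first exact: geq_refl.
rewrite emb_cat -catA.
have H : geq (relators R phi) [:: (None, true); (Some a, b)]
              (emb (phiL phi (a, b)) ++ [:: (None, true)]).
  by case: b; [exact: comm1' | exact: comm1].
have := geq_catr (emb u) H; rewrite -catA /= => H2; apply: geq_trans H2 _.
exact: geq_catl.
Qed.

Lemma commJ (Ax : finType) (R : seq (aword Ax)) phi j u :
  exists v, geq (relators R phi) (tinvpow Ax j ++ emb u) (emb v ++ tinvpow Ax j).
Proof.
elim: j u => [|j IH] u; first by exists u; rewrite /= cats0; exact: geq_refl.
have [v Hv] := IH u; exists (phiS phi v).
rewrite (_ : tinvpow Ax j.+1 = [:: (None, true)] ++ tinvpow Ax j) // -catA; apply: geq_trans (geq_catl _ Hv) _.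
rewrite catA; have := geq_catr (tinvpow Ax j) (commS R phi v).
by rewrite -!catA.
Qed.

Definition Bj (Ax : finType) (rels : seq (word Ax)) j (g : word Ax) :=
  exists u, geq rels g (emb u ++ tinvpow Ax j).

Lemma B_geq (Ax : finType) (rels : seq (word Ax)) j g g' :
  geq rels g g' -> Bj rels j g -> Bj rels j g'.
Proof. by move=> H [u Hu]; exists u; apply: geq_trans (geq_sym H) Hu. Qed.

Lemma L1 (Ax : finType) (R : seq (aword Ax)) phi j g v :
  Bj (relators R phi) j g -> Bj (relators R phi) j (g ++ emb v).
Proof.
move=> [u Hu]; have [v' Hv'] := commJ R phi j v.
exists (u ++ v'); rewrite emb_cat -catA.
apply: geq_trans (geq_catr _ Hu) _; rewrite -catA; exact: geq_catl.
Qed.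

Lemma L2 (Ax : finType) (rels : seq (word Ax)) j g :
  Bj rels j g -> Bj rels j.+1 (g ++ [:: (None, true)]).
Proof.
move=> [u Hu]; exists u; rewrite tinvpowS catA; exact: geq_catr.
Qed.

Lemma L3 (Ax : finType) (rels : seq (word Ax)) j g :
  Bj rels j.+1 g -> Bj rels j (g ++ [:: (None, false)]).
Proof.
move=> [u Hu]; exists u; apply: geq_trans (geq_catr _ Hu) _.
rewrite tinvpowS -!catA /=.
have := geq_free rels (emb u ++ tinvpow Ax j) [::] (None, true).
by rewrite cats0 -!catA.
Qed.

Lemma L1' (Ax : finType) (R : seq (aword Ax)) phi j g v :
  Bj (relators R phi) j (g ++ emb v) -> Bj (relators R phi) j g.
Proof.
move=> /(L1 (ainv v)); apply: B_geq.
rewrite -catA emb_ainv; have := geq_catl g (geq_cancel_r (relators R phi) (emb v)).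
by rewrite cats0.
Qed.

Lemma L2' (Ax : finType) (rels : seq (word Ax)) j g :
  Bj rels j.+1 (g ++ [:: (None, true)]) -> Bj rels j g.
Proof.
move=> /L3; apply: B_geq; rewrite -catA /=.
by have := geq_free rels g [::] (None, true); rewrite cats0.
Qed.

Lemma L3' (Ax : finType) (rels : seq (word Ax)) j g :
  Bj rels j (g ++ [:: (None, false)]) -> Bj rels j.+1 g.
Proof.
move=> /L2; apply: B_geq; rewrite -catA /=.
by have := geq_free rels g [::] (None, false); rewrite cats0.
Qed.

Lemma Lpow (Ax : finType) (rels : seq (word Ax)) e j g :
  Bj rels j g -> Bj rels (e + j) (g ++ tinvpow Ax e).
Proof.
elim: e => [|e IH] H /=; first by rewrite cats0.
by rewrite tinvpowS catA; apply: L2; apply: IH.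
Qed.

Lemma prefix_rel (Ax : finType) (R : seq (aword Ax)) phi r i :
  r \in relators R phi -> exists e u, e <= 1 /\
    geq (relators R phi) (take i r) (tinvpow Ax e ++ emb u).
Proof.
rewrite mem_cat => /orP [] /mapP [x Hx ->].
  by exists 0, (take i x); split=> //; rewrite /emb -map_take; exact: geq_refl.
case: i => [|[|[|i]]].
- by exists 0, [::]; split=> //; exact: geq_refl.
- by exists 1, [::]; split=> //; exact: geq_refl.
- by exists 1, [:: (x, false)]; split=> //; exact: geq_refl.
exists 0, (phi x ++ take i (ainv (phi x))); split=> //=.
rewrite -emb_ainv emb_cat /emb map_take -/(emb _).
have H : geq (relators R phi) [:: (None, true); (Some x, false); (None, false)] (emb (phi x)).
  have := geq_catr [:: (None, false)] (comm1 R phi x); rewrite -catA /= => H.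
  apply: geq_trans H _.
  by have := geq_free (relators R phi) (emb (phi x)) [::] (None, true); rewrite cats0.
exact: (geq_catr _ H).
Qed.

Lemma not_B_t (Ax : finType) (R : seq (aword Ax)) phi j :
  ~ Bj (relators R phi) j (t_word Ax).
Proof.
move=> [u /geq_ht]; rewrite ht_cat ht_emb ht_tinvpow.
have -> : ht (t_word Ax) = 1%Z by [].
lia.
Qed.

Lemma step (Ax : finType) (R : seq (aword Ax)) phi M h k :
  let rels := relators R phi in
  ~ (exists j, Bj rels j h) -> ~ inTAQ rels 0 M k -> cell_adj rels h k ->
  ~ (exists j, Bj rels j k).
Proof.
move=> rels nBh nSk Hadj [j Bk].
case: j Bk => [|j] Bk.
  by apply: nSk; case: Bk => u Hu; exists u, 0; split.
case: Hadj => [Hhk|[[x Hx]|[c [r [k' [l [Hr [Hh Hk]]]]]]]].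
- by apply: nBh; exists j.+1; apply: B_geq (geq_sym Hhk) Bk.
- have Bk' : Bj rels j.+1 (h ++ [:: x]) by apply: B_geq Hx Bk.
  have E : geq rels ((h ++ [:: x]) ++ [:: inv_letter x]) h.
    by rewrite -catA; have := geq_free rels h [::] x; rewrite cats0.
  apply: nBh; case: x Hx Bk' E => [[a|] b] _ Bk' E.
  + exists j.+1; apply: B_geq E _.
    by have := @L1 _ R phi _ _ [:: (a, ~~ b)] Bk'.
  + case: b Bk' E => Bk' E /=.
    * exists j; apply: B_geq E _; exact: L3.
    * exists j.+2; apply: B_geq E _; exact: L2.
- have [e [u [He Hl]]] := prefix_rel l Hr.
  have [e' [u' [He' Hk']]] := prefix_rel k' Hr.
  have Bc : Bj rels j.+1 (c ++ tinvpow Ax e ++ emb u).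
    exact: B_geq (geq_trans Hk (geq_catl c Hl)) Bk.
  rewrite catA in Bc; have {}Bc := L1' Bc.
  have [jc Bc2] : exists jc, Bj rels jc c.
    case: e He Hl Bc => [|[|//]] _ _ /= Bc; first by exists j.+1; rewrite cats0 in Bc.
    by exists j; apply: L2'.
  apply: nBh; exists (e' + jc).
  apply: B_geq (geq_sym Hh) _; apply: B_geq (geq_sym (geq_catl c Hk')) _.
  rewrite catA; apply: L1; exact: Lpow.
Qed.

Lemma conn_inv (Ax : finType) (R : seq (aword Ax)) phi M g h :
  conn (relators R phi) (inTAQ (relators R phi) 0 M) g h ->
  ~ (exists j, Bj (relators R phi) j g) -> ~ (exists j, Bj (relators R phi) j h).
Proof.
elim=> {h} // h h' k _ IH nSk Hadj nBg.
exact: (step (IH nBg) nSk Hadj).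
Qed.

Lemma Bpow (Ax : finType) (rels : seq (word Ax)) n m w :
  Bj rels m (w ++ tpow Ax n) -> Bj rels (n + m) w.
Proof.
elim: n m w => [|n IH] m w /=; first by rewrite cats0.
rewrite catA => /IH H; exact: L3'.
Qed.

Theorem lemma5p8 (Ax : finType) (R : seq (aword Ax)) (phi : Ax -> aword Ax)
  (HR : all (@areduced Ax) R) (Hphi : forall a, areduced (phi a))
  (M N : nat) (w : word Ax) :
  (* w is a vertex of K_0: the component of X - A.Q(M) containing t;
     then v := t^N w is a vertex of the component t^N K_0 *)
  conn (relators R phi) (inTAQ (relators R phi) 0 M) (t_word Ax) w ->
  forall (n : nat) (g : word Ax), inA (relators R phi) g ->
    ~ inTAQ (relators R phi) N M (tpow Ax N ++ w ++ tpow Ax n ++ g).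
Proof.
move=> Hc n g [ug Hg] [u [m [Hm Heq]]].
have Hw := geq_lcancel Heq.
have B1 : Bj (relators R phi) m ((w ++ tpow Ax n) ++ emb ug).
  exists u; apply: geq_trans (geq_sym _) Hw; rewrite -catA.
  exact: geq_catl (geq_catl _ Hg).
have := Bpow (L1' B1) => Bw.
have nBt : ~ (exists j, Bj (relators R phi) j (t_word Ax)).
  by move=> [j]; apply: not_B_t.
by apply: (conn_inv Hc nBt); exists (n + m).
Qed.
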